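(* Let $c,k\in\mathbb{N}$ with $c$ not a perfect square and $k$ even. Then there exists a normal set $A\subset\mathbb{N}$ such that $xy\neq cn^k$ for all $x,y\in A$ and all $n\in\mathbb{N}$.
   Context: $\mathbb{N}=\{1,2,\dots\}$. A set $A\subset\mathbb{N}$ is normal if its indicator sequence in $\{0,1\}^{\mathbb{N}}$ contains every finite binary word $w$ with asymptotic frequency $2^{-|w|}$. *)

(* Defs.v *)
From Stdlib Require Import Reals List Arith.
From Coquelicot Require Import Coquelicot.
Open Scope R_scope.

(* A subset A of N = {1,2,...} is represented by a boolean predicate on nat;
   only its values on positive integers matter. *)

Definition indicator (A : nat -> bool) (i : nat) : bool := A (S i).

Definition occurs_atb (s : nat -> bool) (w : list bool) (i : nat) : bool :=
  forallb (fun j => Bool.eqb (s (i + j)%nat) (nth j w false)) (seq 0 (length w)).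

Definition occ_count (s : nat -> bool) (w : list bool) (N : nat) : nat :=
  length (filter (occurs_atb s w) (seq 0 N)).

Definition normal_set (A : nat -> bool) : Prop :=
  forall w : list bool,
    is_lim_seq (fun N => INR (occ_count (indicator A) w N) / INR N)
               (Rinv (2 ^ length w)).

Definition is_perfect_square (c : nat) : Prop := exists m : nat, (m * m)%nat = c.

(* Main.v *)
Require Import Defs.
From Stdlib Require Import Reals List Arith.
From Coquelicot Require Import Coquelicot.
From Stdlib Require Import Lra Lia Bool ClassicalEpsilon.
Import ListNotations.
Open Scope nat_scope.

Definition is_sq (n:nat) : bool := Nat.sqrt n * Nat.sqrt n =? n.

Lemma is_sq_spec n : is_sq n = true <-> exists m, m*m = n.
Proof.
  unfold is_sq; rewrite Nat.eqb_eq; split.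
  - intros H; exists (Nat.sqrt n); exact H.
  - intros [m <-]; now rewrite Nat.sqrt_square.
Qed.

Lemma sq_sq m : is_sq (m*m) = true.
Proof. apply is_sq_spec; eauto. Qed.

Lemma sq_mul a b : is_sq a = true -> is_sq b = true -> is_sq (a*b) = true.
Proof.
  rewrite !is_sq_spec; intros [x <-] [y <-]; exists (x*y); ring.
Qed.

Lemma divide_sq_cancel y s : 0 < y -> Nat.divide (y*y) (s*s) -> Nat.divide y s.
Proof.
  intros Hy [q Hq].
  set (g := Nat.gcd y s).
  assert (Hg0 : g <> 0) by (unfold g; intro H; apply Nat.gcd_eq_0 in H; lia).
  destruct (Nat.gcd_divide_l y s) as [u Hu].
  destruct (Nat.gcd_divide_r y s) as [v Hv].
  fold g in Hu, Hv.
  assert (Huv : Nat.gcd u v = 1).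
  { assert (Hd : Nat.gcd (y/g) (s/g) = 1) by (apply Nat.gcd_div_gcd; auto).
    rewrite Hu, Hv, !Nat.div_mul in Hd; auto. }
  assert (Hqe : q * (u * u) = v * v).
  { assert (g*g*(q*(u*u)) = g*g*(v*v)) by (rewrite Hu, Hv in Hq; lia).
    apply Nat.mul_cancel_l in H; [exact H| nia]. }
  assert (Hu1 : Nat.divide u (v*v)) by (exists (q*u); lia).
  apply Nat.gauss in Hu1; [|exact Huv].
  assert (u = 1).
  { assert (Nat.divide u (Nat.gcd u v)) by (apply Nat.gcd_greatest; [apply Nat.divide_refl|exact Hu1]).
    rewrite Huv in H. apply Nat.divide_1_r in H. exact H. }
  subst u. exists v. lia.
Qed.

Lemma sq_cancel n y : 0 < y -> is_sq (n*(y*y)) = true -> is_sq n = true.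
Proof.
  intros Hy Hs. apply is_sq_spec in Hs as [s Hs].
  assert (Nat.divide y s) as [a Ha].
  { apply divide_sq_cancel; auto. exists n; lia. }
  apply is_sq_spec. exists a. subst s.
  assert ((y*y)*(a*a) = (y*y)*n) by lia.
  apply Nat.mul_cancel_l in H; nia.
Qed.

Fixpoint lst (f : nat -> bool) (n : nat) : nat :=
  match n with 0 => 0 | S n' => if f (lst f n') then lst f n' else S n' end.

Lemma lst_inv f n : (forall j, j < lst f n -> f j = false) /\ (f (lst f n) = true \/ lst f n = n).
Proof.
  induction n as [|n [IH1 IH2]]; simpl.
  - split; [intros; lia| auto].
  - destruct (f (lst f n)) eqn:E.
    + split; auto.
    + destruct IH2 as [IH2|IH2]; [congruence|].
      split; [|auto]. intros j Hj. destruct (Nat.eq_dec j n); [subst; rewrite <- IH2 at 1; exact E|].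
      apply IH1; lia.
Qed.

Lemma lst_le f n : lst f n <= n.
Proof. induction n; simpl; [lia|]. destruct (f (lst f n)); lia. Qed.

Lemma lst_spec f n : f n = true -> f (lst f n) = true /\ forall j, j < lst f n -> f j = false.
Proof.
  intros H. destruct (lst_inv f n) as [H1 [H2|H2]]; split; auto. rewrite H2; auto.
Qed.

Lemma least_unique f a b : f a = true -> (forall j, j < a -> f j = false) ->
  f b = true -> (forall j, j < b -> f j = false) -> a = b.
Proof.
  intros Ha Ha' Hb Hb'. destruct (lt_eq_lt_dec a b) as [[H|H]|H]; auto.
  - rewrite Hb' in Ha; auto; discriminate.
  - rewrite Ha' in Hb; auto; discriminate.
Qed.

Definition core (z : nat) := lst (fun y => (0 <? y) && is_sq (z*y)) z.

Lemma core_spec z : 0 < z -> 0 < core z /\ is_sq (z * core z) = true /\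
  forall j, j < core z -> 0 < j -> is_sq (z*j) = false.
Proof.
  intros Hz.
  destruct (lst_spec (fun y => (0 <? y) && is_sq (z*y)) z) as [H1 H2].
  { apply andb_true_intro; split; [apply Nat.ltb_lt; auto| apply sq_sq]. }
  fold (core z) in H1, H2.
  apply andb_prop in H1 as [H1 H1']. apply Nat.ltb_lt in H1.
  repeat split; auto. intros j Hj Hj0. specialize (H2 j Hj). simpl in H2.
  apply andb_false_iff in H2 as [H2|H2]; auto. apply Nat.ltb_nlt in H2; lia.
Qed.

Lemma core_rep z y : 0 < z -> 0 < y -> is_sq (z*y) = true ->
  exists a, 0 < a /\ y = core z * (a*a).
Proof.
  intros Hz Hy Hzy. destruct (core_spec z Hz) as [He [Hze Hmin]].
  set (e := core z) in *.
  assert (Hey : is_sq (e*y) = true).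
  { apply (sq_cancel _ z); auto. replace (e*y*(z*z)) with ((z*e)*(z*y)) by ring.
    apply sq_mul; auto. }
  apply is_sq_spec in Hey as [s Hs].
  set (g := Nat.gcd e s).
  assert (Hg0 : g <> 0) by (unfold g; intro H; apply Nat.gcd_eq_0 in H; lia).
  destruct (Nat.gcd_divide_l e s) as [u Hu].
  destruct (Nat.gcd_divide_r e s) as [v Hv].
  fold g in Hu, Hv.
  assert (Huv : Nat.gcd u v = 1).
  { assert (Hd : Nat.gcd (e/g) (s/g) = 1) by (apply Nat.gcd_div_gcd; auto).
    rewrite Hu, Hv, !Nat.div_mul in Hd; auto. }
  assert (Huy : u * y = v * v * g).
  { assert (g*(u*y) = g*(v*v*g)) by (rewrite Hu, Hv in Hs; nia).
    apply Nat.mul_cancel_l in H; auto. }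
  assert (Hdiv : Nat.divide u (v*(v*g))) by (exists y; lia).
  apply Nat.gauss in Hdiv; [|exact Huv].
  apply Nat.gauss in Hdiv; [|exact Huv].
  destruct Hdiv as [w Hw].
  assert (Hu0 : 0 < u) by nia.
  assert (Hw0 : 0 < w) by nia.
  assert (Hzw : is_sq (z*w) = true).
  { apply (sq_cancel _ u); auto. replace (z*w*(u*u)) with (z*e) by (rewrite Hu, Hw; ring). auto. }
  assert (Hu1 : u = 1).
  { destruct (Nat.eq_dec u 1); auto. exfalso.
    assert (w < e) by (rewrite Hu, Hw; nia).
    specialize (Hmin w H Hw0). congruence. }
  subst u. exists v. split.
  - destruct v; [nia|lia].
  - assert (g = e) by lia. rewrite H in Huy. lia.
Qed.

Definition rel (c x y : nat) : bool := is_sq (x*y) || is_sq (x*y*c).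
Definition relp (c x : nat) := fun y => (0 <? y) && rel c x y.
Definition pid (c x : nat) := lst (relp c x) x.
Definition side (c x : nat) := is_sq (x * pid c x).
Definition Ucol (c : nat) (om : nat -> bool) (x : nat) := Bool.eqb (om (pid c x)) (side c x).

Lemma rel_refl c x : rel c x x = true.
Proof. unfold rel. rewrite sq_sq. auto. Qed.

Lemma rel_sym c x y : rel c x y = rel c y x.
Proof. unfold rel. now rewrite (Nat.mul_comm x y). Qed.

Lemma rel_trans c x y z : 0 < c -> 0 < y -> rel c x y = true -> rel c y z = true -> rel c x z = true.
Proof.
  intros Hc Hy H1 H2. unfold rel in *.
  apply orb_prop in H1; apply orb_prop in H2.
  destruct H1 as [H1|H1]; destruct H2 as [H2|H2]; apply orb_true_intro.
  - left. apply (sq_cancel _ y); auto. replace (x*z*(y*y)) with ((x*y)*(y*z)) by ring. apply sq_mul; auto.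
  - right. apply (sq_cancel _ y); auto. replace (x*z*c*(y*y)) with ((x*y)*(y*z*c)) by ring. apply sq_mul; auto.
  - right. apply (sq_cancel _ y); auto. replace (x*z*c*(y*y)) with ((x*y*c)*(y*z)) by ring. apply sq_mul; auto.
  - left. apply (sq_cancel _ (y*c)); [nia|]. replace (x*z*(y*c*(y*c))) with ((x*y*c)*(y*z*c)) by ring. apply sq_mul; auto.
Qed.

Lemma pid_spec c x : 0 < x -> 0 < pid c x /\ pid c x <= x /\ rel c x (pid c x) = true /\
  forall j, j < pid c x -> 0 < j -> rel c x j = false.
Proof.
  intros Hx. destruct (lst_spec (relp c x) x) as [H1 H2].
  { unfold relp. rewrite rel_refl. apply Nat.ltb_lt in Hx. now rewrite Hx. }
  fold (pid c x) in H1, H2. unfold relp in H1. apply andb_prop in H1 as [H1 H1'].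
  apply Nat.ltb_lt in H1. repeat split; auto.
  - apply lst_le.
  - intros j Hj Hj0. specialize (H2 j Hj). unfold relp in H2. apply Nat.ltb_lt in Hj0. now rewrite Hj0 in H2.
Qed.

Lemma pid_eq c x y : 0 < c -> 0 < x -> 0 < y -> rel c x y = true -> pid c x = pid c y.
Proof.
  intros Hc Hx Hy Hr.
  assert (Hpt : forall j, relp c x j = relp c y j).
  { intros j. unfold relp. destruct (0 <? j) eqn:Ej; simpl; auto. apply Nat.ltb_lt in Ej.
    destruct (rel c x j) eqn:E1; destruct (rel c y j) eqn:E2; auto.
    - rewrite rel_sym in Hr. rewrite (rel_trans c y x j Hc Hx Hr E1) in E2. discriminate.
    - rewrite (rel_trans c x y j Hc Hy Hr E2) in E1. discriminate. }
  destruct (lst_spec (relp c x) x) as [A1 A2].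
  { unfold relp. rewrite rel_refl. apply Nat.ltb_lt in Hx. now rewrite Hx. }
  destruct (lst_spec (relp c y) y) as [B1 B2].
  { unfold relp. rewrite rel_refl. apply Nat.ltb_lt in Hy. now rewrite Hy. }
  apply (least_unique (relp c x)); auto.
  - rewrite Hpt; exact B1.
  - intros j Hj. rewrite Hpt. apply B2; auto.
Qed.

Lemma pid_rel c x y : 0 < c -> 0 < x -> 0 < y -> pid c x = pid c y -> rel c x y = true.
Proof.
  intros Hc Hx Hy He. destruct (pid_spec c x Hx) as [P1 [_ [P3 _]]].
  destruct (pid_spec c y Hy) as [_ [_ [Q3 _]]].
  rewrite He in P3. rewrite rel_sym in Q3. eapply rel_trans; eauto; rewrite <- He; auto.
Qed.

Lemma no_conflict c om x y : 0 < c -> ~ (exists m, m*m = c) -> 0 < x -> 0 < y ->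
  is_sq (x*y*c) = true -> Ucol c om x = true -> Ucol c om y = true -> False.
Proof.
  intros Hc Hsq Hx Hy Hxyc Ux Uy.
  assert (Hr : rel c x y = true) by (unfold rel; rewrite Hxyc; apply orb_true_r).
  assert (Hp : pid c x = pid c y) by (apply pid_eq; auto).
  assert (Hnxy : is_sq (x*y) = false).
  { destruct (is_sq (x*y)) eqn:E; auto. exfalso. apply is_sq_spec in E as [a Ha].
    assert (0 < a) by nia. apply Hsq. apply is_sq_spec. apply (sq_cancel _ a); auto.
    rewrite Ha. rewrite Nat.mul_comm. auto. }
  unfold Ucol in Ux, Uy. rewrite Hp in Ux. apply Bool.eqb_prop in Ux, Uy.
  rewrite Ux in Uy. unfold side in Uy. rewrite <- Hp in Uy.
  destruct (pid_spec c x Hx) as [P0 [_ [P3 _]]].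
  destruct (pid_spec c y Hy) as [_ [_ [Q3 _]]]. rewrite <- Hp in Q3.
  set (p := pid c x) in *.
  destruct (is_sq (x*p)) eqn:E1.
  - assert (is_sq (x*y) = true).
    { apply (sq_cancel _ p); auto. replace (x*y*(p*p)) with ((x*p)*(y*p)) by ring. apply sq_mul; auto. }
    congruence.
  - unfold rel in P3, Q3. rewrite E1 in P3. rewrite <- Uy in Q3. simpl in P3, Q3.
    assert (is_sq (x*y) = true).
    { apply (sq_cancel _ (p*c)); [nia|]. replace (x*y*(p*c*(p*c))) with ((x*p*c)*(y*p*c)) by ring. apply sq_mul; auto. }
    congruence.
Qed.

Definition cnt (f : nat -> bool) (l : list nat) := length (filter f l).

Lemma cnt_or f g l : cnt (fun y => f y || g y) l <= cnt f l + cnt g l.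
Proof.
  unfold cnt; induction l; simpl; auto.
  destruct (f a), (g a); simpl; lia.
Qed.

Lemma cnt_le f g l : (forall y, f y = true -> g y = true) -> cnt f l <= cnt g l.
Proof.
  intros H; unfold cnt; induction l; simpl; auto.
  destruct (f a) eqn:E; [rewrite (H a E); simpl; lia|]. destruct (g a); simpl; lia.
Qed.

Lemma cnt_sq z N : 0 < z -> cnt (fun y => is_sq (z*y)) (seq 1 N) <= Nat.sqrt N.
Proof.
  intros Hz. unfold cnt.
  rewrite <- (length_seq (Nat.sqrt N) 1).
  rewrite <- (length_map (fun a => core z * (a*a)) (seq 1 (Nat.sqrt N))).
  apply NoDup_incl_length; [apply NoDup_filter, seq_NoDup|].
  intros y Hy. apply filter_In in Hy as [Hy1 Hy2]. apply in_seq in Hy1.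
  destruct (core_rep z y Hz ltac:(lia) Hy2) as [a [Ha Hya]].
  apply in_map_iff. exists a. split; auto. apply in_seq.
  destruct (core_spec z Hz) as [He _].
  assert (a*a <= N) by nia. apply Nat.sqrt_le_square in H. lia.
Qed.

Lemma cnt_rel c x N : 0 < c -> 0 < x -> cnt (rel c x) (seq 1 N) <= 2 * Nat.sqrt N.
Proof.
  intros Hc Hx. unfold rel.
  eapply Nat.le_trans; [apply (cnt_or (fun y => is_sq (x*y)) (fun y => is_sq (x*y*c)))|].
  assert (cnt (fun y => is_sq (x*y*c)) (seq 1 N) <= Nat.sqrt N).
  { eapply Nat.le_trans; [|apply (cnt_sq (x*c)); nia].
    apply cnt_le. intros y. now replace (x*c*y) with (x*y*c) by ring. }
  pose proof (cnt_sq x N Hx). lia.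
Qed.

Lemma adj1_bound x d s : 0 < x -> 0 < d -> s*s = x*(x+d) -> x < d*d.
Proof.
  intros Hx Hd Hs.
  assert (x < s) by nia. assert (s < x + d) by nia.
  destruct (Nat.le_exists_sub x s) as [r [Hr _]]; [lia|]. subst s.
  assert (x*d = 2*x*r + r*r) by nia.
  assert (2*r < d) by nia.
  nia.
Qed.

Lemma cnt_adj1 d N : 0 < d -> cnt (fun x => is_sq (x*(x+d))) (seq 1 N) <= d*d.
Proof.
  intros Hd. unfold cnt.
  apply Nat.le_trans with (length (seq 1 (d*d))); [|rewrite length_seq; lia].
  apply NoDup_incl_length; [apply NoDup_filter, seq_NoDup|].
  intros x Hx. apply filter_In in Hx as [Hx1 Hx2]. apply in_seq in Hx1.
  apply is_sq_spec in Hx2 as [s Hs]. apply in_seq.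
  pose proof (adj1_bound x d s ltac:(lia) Hd Hs). lia.
Qed.

Lemma cnt_adj2 c d N : 0 < c -> 0 < d -> cnt (fun x => is_sq (x*(x+d)*c)) (seq 1 N) <= d*c*Nat.sqrt N.
Proof.
  intros Hc Hd. unfold cnt.
  set (L := flat_map (fun g => flat_map (fun e => map (fun a => g*e*(a*a)) (seq 1 (Nat.sqrt N))) (seq 1 c)) (seq 1 d)).
  assert (HL : length L = d*c*Nat.sqrt N).
  { unfold L. rewrite (flat_map_constant_length (c:=c*Nat.sqrt N)).
    - rewrite length_seq; lia.
    - intros g _. rewrite (flat_map_constant_length (c:=Nat.sqrt N)).
      + rewrite length_seq; lia.
      + intros e _. rewrite length_map, length_seq; auto. }
  rewrite <- HL. apply NoDup_incl_length; [apply NoDup_filter, seq_NoDup|].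
  intros x Hx. apply filter_In in Hx as [Hx1 Hx2]. apply in_seq in Hx1.
  set (g := Nat.gcd x (x+d)).
  assert (Hg0 : g <> 0) by (unfold g; intro H; apply Nat.gcd_eq_0 in H; lia).
  destruct (Nat.gcd_divide_l x (x+d)) as [x1 Hx1'].
  destruct (Nat.gcd_divide_r x (x+d)) as [x2 Hx2'].
  fold g in Hx1', Hx2'.
  assert (Hgd : Nat.divide g d).
  { replace d with (x + d - x) by lia. apply Nat.divide_sub_r; [apply Nat.gcd_divide_r|apply Nat.gcd_divide_l]. }
  assert (Hgd' : g <= d) by (apply Nat.divide_pos_le; auto).
  assert (Hco : Nat.gcd x1 x2 = 1).
  { assert (Hd' : Nat.gcd (x/g) ((x+d)/g) = 1) by (apply Nat.gcd_div_gcd; auto).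
    rewrite Hx1' in Hd' at 1. rewrite Hx2' in Hd'. rewrite !Nat.div_mul in Hd'; auto. }
  assert (Hx10 : 0 < x1) by nia.
  assert (Hx20 : 0 < x2) by nia.
  assert (Hsq : is_sq (x1*(x2*c)) = true).
  { apply (sq_cancel _ g); [lia|]. replace (x1*(x2*c)*(g*g)) with (x*(x+d)*c); auto.
    rewrite Hx1' at 1. rewrite Hx2'. ring. }
  destruct (core_rep x1 x1 Hx10 Hx10 (sq_sq x1)) as [a [Ha Hxa]].
  destruct (core_rep x1 (x2*c) Hx10 ltac:(nia) Hsq) as [b [Hb Hxb]].
  set (e := core x1) in *.
  destruct (core_spec x1 Hx10) as [He _]. fold e in He.
  assert (Hec : Nat.divide e c).
  { apply (Nat.gauss _ x2). { exists (b*b). rewrite Hxb. ring. }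
    assert (Nat.divide (Nat.gcd e x2) (Nat.gcd x1 x2)).
    { apply Nat.gcd_greatest; [|apply Nat.gcd_divide_r].
      apply Nat.divide_trans with e; [apply Nat.gcd_divide_l|]. exists (a*a). rewrite Hxa. ring. }
    rewrite Hco in H. apply Nat.divide_1_r in H. exact H. }
  assert (Hec' : e <= c) by (apply Nat.divide_pos_le; auto).
  unfold L. apply in_flat_map. exists g. split; [apply in_seq; lia|].
  apply in_flat_map. exists e. split; [apply in_seq; lia|].
  apply in_map_iff. exists a. split.
  - rewrite Hx1', Hxa. ring.
  - apply in_seq. assert (a*a <= N) by nia. apply Nat.sqrt_le_square in H. lia.
Qed.

Lemma cnt_adj c d N : 0 < c -> 0 < d -> cnt (fun x => rel c x (x+d)) (seq 1 N) <= d*d + d*c*Nat.sqrt N.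
Proof.
  intros Hc Hd. unfold rel.
  eapply Nat.le_trans; [apply (cnt_or (fun x => is_sq (x*(x+d))) (fun x => is_sq (x*(x+d)*c)))|].
  pose proof (cnt_adj1 d N Hd). pose proof (cnt_adj2 c d N Hc Hd). lia.
Qed.

Open Scope R_scope.

Fixpoint fsum (f : nat -> R) (n : nat) : R :=
  match n with O => 0 | S n' => fsum f n' + f n' end.

Lemma fsum_ext f g n : (forall k, (k < n)%nat -> f k = g k) -> fsum f n = fsum g n.
Proof. induction n; intros H; simpl; auto. rewrite IHn, H; auto. Qed.

Lemma fsum_plus f g n : fsum (fun k => f k + g k) n = fsum f n + fsum g n.
Proof. induction n; simpl; [lra|]. rewrite IHn; lra. Qed.

Lemma fsum_scal a f n : fsum (fun k => a * f k) n = a * fsum f n.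
Proof. induction n; simpl; [lra|]. rewrite IHn; lra. Qed.

Lemma fsum_const a n : fsum (fun _ => a) n = INR n * a.
Proof. induction n; simpl fsum; [simpl; lra|]. rewrite IHn, S_INR; lra. Qed.

Lemma fsum_le f g n : (forall k, (k < n)%nat -> f k <= g k) -> fsum f n <= fsum g n.
Proof. induction n; intros H; simpl; [lra|]. pose proof (H n ltac:(lia)). pose proof (IHn ltac:(auto)). lra. Qed.

Lemma fsum_nonneg f n : (forall k, (k < n)%nat -> 0 <= f k) -> 0 <= fsum f n.
Proof. intros H. replace 0 with (fsum (fun _ => 0) n) by (rewrite fsum_const; lra). apply fsum_le; auto. Qed.

Lemma fsum_term f n k : (forall k, (k < n)%nat -> 0 <= f k) -> (k < n)%nat -> f k <= fsum f n.
Proof.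
  induction n; intros H Hk; [lia|]. simpl.
  destruct (Nat.eq_dec k n).
  - subst. pose proof (fsum_nonneg f n ltac:(auto)). lra.
  - pose proof (IHn ltac:(auto) ltac:(lia)). pose proof (H n ltac:(lia)). lra.
Qed.

Lemma fsum_mul f g n m : fsum f n * fsum g m = fsum (fun i => fsum (fun j => f i * g j) m) n.
Proof.
  induction n; simpl; [lra|]. rewrite <- IHn. rewrite fsum_scal. lra.
Qed.

Lemma fsum_cnt (P : nat -> bool) b K : fsum (fun k => if P (b + k)%nat then 1 else 0) K = INR (cnt P (seq b K)).
Proof.
  induction K; cbn [fsum]; auto. rewrite IHK. unfold cnt.
  rewrite seq_S, filter_app, length_app. simpl. rewrite plus_INR.
  destruct (P (b+K)%nat); simpl; lra.
Qed.

Lemma cnt_app P l1 l2 : cnt P (l1 ++ l2) = (cnt P l1 + cnt P l2)%nat.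
Proof. unfold cnt. now rewrite filter_app, length_app. Qed.

Lemma cnt_sub P b K N : (1 <= b)%nat -> (b + K <= N + 1)%nat -> (cnt P (seq b K) <= cnt P (seq 1 N))%nat.
Proof.
  intros H1 H2.
  replace N with ((b - 1) + (K + (N + 1 - b - K)))%nat by lia.
  rewrite !seq_app, !cnt_app. replace (1 + (b-1))%nat with b by lia. lia.
Qed.

(* finite uniform expectation *)
Definition upd (om : nat -> bool) (k : nat) (b : bool) : nat -> bool :=
  fun j => if Nat.eqb j k then b else om j.

Fixpoint Ex (M : nat) (f : (nat -> bool) -> R) : R :=
  match M with
  | O => f (fun _ => false)
  | S M' => (Ex M' (fun om => f (upd om M' false)) + Ex M' (fun om => f (upd om M' true))) / 2
  end.

Lemma Ex_ext M f g : (forall om, f om = g om) -> Ex M f = Ex M g.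
Proof. revert f g; induction M; intros f g H; simpl; auto. rewrite (IHM _ (fun om => g (upd om M false))), (IHM (fun om => f (upd om M true)) (fun om => g (upd om M true))); auto. Qed.

Lemma Ex_plus M f g : Ex M (fun om => f om + g om) = Ex M f + Ex M g.
Proof. revert f g; induction M; intros f g; simpl; auto. rewrite !IHM. lra. Qed.

Lemma Ex_scal M a f : Ex M (fun om => a * f om) = a * Ex M f.
Proof. revert f; induction M; intros f; simpl; auto. rewrite !IHM. lra. Qed.

Lemma Ex_const M a : Ex M (fun _ => a) = a.
Proof. induction M; simpl; auto. rewrite IHM. lra. Qed.

Lemma Ex_le M f g : (forall om, f om <= g om) -> Ex M f <= Ex M g.
Proof. revert f g; induction M; intros f g H; simpl; auto.
  pose proof (IHM (fun om => f (upd om M false)) (fun om => g (upd om M false)) (fun om => H _)).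
  pose proof (IHM (fun om => f (upd om M true)) (fun om => g (upd om M true)) (fun om => H _)). lra. Qed.

Lemma Ex_fsum M (F : nat -> (nat -> bool) -> R) n : Ex M (fun om => fsum (fun k => F k om) n) = fsum (fun k => Ex M (F k)) n.
Proof.
  induction n; simpl. { apply Ex_const. } rewrite Ex_plus, IHn. auto.
Qed.

Lemma Ex_exists M (P : (nat -> bool) -> Prop) (g : (nat -> bool) -> R) :
  (forall om, ~ P om -> 1 <= g om) -> Ex M g < 1 -> exists om, P om.
Proof.
  intros H1 H2. apply Classical_Prop.NNPP. intros Hn.
  assert (Ex M (fun _ => 1) <= Ex M g).
  { apply Ex_le. intros om. apply H1. intros Hp. apply Hn. eauto. }
  rewrite Ex_const in H. lra.
Qed.

Definition agree (L : list (nat * bool)) (om : nat -> bool) : bool :=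
  forallb (fun p => Bool.eqb (om (fst p)) (snd p)) L.

Lemma agree_upd L om k b : ~ In k (map fst L) -> agree L (upd om k b) = agree L om.
Proof.
  induction L as [|[i v] L IH]; simpl; auto. intros H.
  unfold upd at 1. destruct (Nat.eqb_spec i k); [exfalso; apply H; auto|]. rewrite IH; auto.
Qed.

Lemma agree_app L1 L2 om : agree (L1 ++ L2) om = agree L1 om && agree L2 om.
Proof. unfold agree. apply forallb_app. Qed.

Definition ind (b : bool) : R := if b then 1 else 0.

Lemma E1 M L : NoDup (map fst L) -> List.Forall (fun p => (fst p < M)%nat) L ->
  Ex M (fun om => ind (agree L om)) = (/2) ^ length L.
Proof.
  revert L; induction M; intros L Hnd Hlt.
  - destruct L as [|p L]; simpl; [auto|]. inversion Hlt; lia.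
  - simpl Ex. destruct (in_dec Nat.eq_dec M (map fst L)) as [Hin|Hnin].
    + apply in_map_iff in Hin as [[i v] [Hi Hin]]. simpl in Hi; subst i.
      apply in_split in Hin as [L1 [L2 ->]].
      rewrite map_app in Hnd. simpl in Hnd.
      assert (Hnd' : NoDup (map fst (L1 ++ L2))) by (rewrite map_app; eapply NoDup_remove_1; eauto).
      assert (Hni : ~ In M (map fst (L1 ++ L2))) by (rewrite map_app; eapply NoDup_remove_2; eauto).
      assert (Hlt' : List.Forall (fun p => (fst p < M)%nat) (L1 ++ L2)).
      { apply Forall_forall. intros p Hp. rewrite Forall_forall in Hlt.
        assert (fst p < S M)%nat by (apply Hlt; apply in_app_or in Hp as [Hp|Hp]; apply in_or_app; simpl; tauto).
        assert (fst p <> M) by (intro E; apply Hni; apply in_map_iff; eauto). lia. }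
      assert (Hk : forall b om, agree (L1 ++ (M, v) :: L2) (upd om M b) = Bool.eqb b v && agree (L1 ++ L2) om).
      { intros b om. rewrite !agree_app. simpl.
        rewrite <- (agree_upd L1 om M b), <- (agree_upd L2 om M b).
        - unfold upd at 2. rewrite Nat.eqb_refl. destruct (Bool.eqb b v), (agree L1 _), (agree L2 _); auto.
        - intro; apply Hni; rewrite map_app; apply in_or_app; auto.
        - intro; apply Hni; rewrite map_app; apply in_or_app; auto. }
      rewrite (Ex_ext M _ (fun om => ind (Bool.eqb false v) * ind (agree (L1++L2) om)))
        by (intros om; rewrite Hk; unfold ind; destruct (Bool.eqb _ v), (agree _ _); simpl; lra).
      rewrite (Ex_ext M (fun om => ind (agree (L1 ++ (M, v) :: L2) (upd om M true))) (fun om => ind (Bool.eqb true v) * ind (agree (L1++L2) om)))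
        by (intros om; rewrite Hk; unfold ind; destruct (Bool.eqb _ v), (agree _ _); simpl; lra).
      rewrite !Ex_scal, IHM; auto. rewrite length_app, length_app. simpl.
      replace (length L1 + S (length L2))%nat with (S (length L1 + length L2)) by lia. simpl.
      destruct v; simpl; unfold ind; simpl; lra.
    + assert (Hlt' : List.Forall (fun p => (fst p < M)%nat) L).
      { apply Forall_forall. intros p Hp. rewrite Forall_forall in Hlt. specialize (Hlt p Hp).
        assert (fst p <> M) by (intro E; apply Hnin; apply in_map_iff; eauto). lia. }
      rewrite (Ex_ext M _ (fun om => ind (agree L om))) by (intros om; rewrite agree_upd; auto).
      rewrite (Ex_ext M (fun om => ind (agree L (upd om M true))) (fun om => ind (agree L om))) by (intros om; rewrite agree_upd; auto).
      rewrite IHM; auto. lra.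
Qed.

Open Scope R_scope.

Lemma forallb_map' {A B} (f : B -> bool) (g : A -> B) l : forallb f (map g l) = forallb (fun x => f (g x)) l.
Proof. induction l; simpl; auto. now rewrite IHl. Qed.

Lemma forallb_ext' {A} (f g : A -> bool) l : (forall x, f x = g x) -> forallb f l = forallb g l.
Proof. intros H; induction l; simpl; auto. now rewrite H, IHl. Qed.

Definition Lwin (c : nat) (w : list bool) (n : nat) : list (nat * bool) :=
  map (fun j => (pid c (S (n+j)), Bool.eqb (side c (S (n+j))) (nth j w false))) (seq 0 (length w)).

Lemma X_agree c w om n : occurs_atb (indicator (Ucol c om)) w n = agree (Lwin c w n) om.
Proof.
  unfold occurs_atb, agree, Lwin. rewrite forallb_map'. apply forallb_ext'. intros j. simpl.
  unfold indicator, Ucol. replace (S (n+j)) with (S (n+j)) by lia.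
  destruct (om (pid c (S (n+j)))), (side c (S (n+j))), (nth j w false); reflexivity.
Qed.

Lemma Lwin_len c w n : length (Lwin c w n) = length w.
Proof. unfold Lwin. rewrite length_map, length_seq. auto. Qed.

Lemma Lwin_fst c w n : map fst (Lwin c w n) = map (fun j => pid c (S (n+j))) (seq 0 (length w)).
Proof. unfold Lwin. rewrite map_map. auto. Qed.

Lemma Lwin_lt c w n M : (n + length w < M)%nat -> List.Forall (fun p => (fst p < M)%nat) (Lwin c w n).
Proof.
  intros H. apply Forall_forall. intros p Hp. unfold Lwin in Hp. apply in_map_iff in Hp as [j [<- Hj]].
  apply in_seq in Hj. simpl. destruct (pid_spec c (S (n+j)) ltac:(lia)) as [_ [Hle _]]. lia.
Qed.

Lemma nodup_seq_map (f : nat -> nat) a l :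
  (forall i j, (i < j < l)%nat -> f (a+i)%nat <> f (a+j)%nat) -> NoDup (map f (seq a l)).
Proof.
  revert a; induction l; intros a H; simpl; [constructor|].
  constructor.
  - intros Hin. apply in_map_iff in Hin as [x [Hx Hin]]. apply in_seq in Hin.
    apply (H 0%nat (x - a)%nat); [lia|]. replace (a + 0)%nat with a by lia. replace (a + (x-a))%nat with x by lia. auto.
  - apply IHl. intros i j Hij. replace (S a + i)%nat with (a + S i)%nat by lia. replace (S a + j)%nat with (a + S j)%nat by lia.
    apply H. lia.
Qed.

Lemma ind_le01 b : 0 <= ind b <= 1.
Proof. unfold ind; destruct b; lra. Qed.

Definition goodw c w n := NoDup (map fst (Lwin c w n)).
Definition pind (P : Prop) : R := if ClassicalEpsilon.excluded_middle_informative P then 1 else 0.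
Lemma pind_le01 P : 0 <= pind P <= 1.
Proof. unfold pind; destruct (ClassicalEpsilon.excluded_middle_informative P); lra. Qed.
Lemma pind_true (P : Prop) : P -> pind P = 1.
Proof. unfold pind; destruct (ClassicalEpsilon.excluded_middle_informative P); tauto. Qed.
Lemma pind_false (P : Prop) : ~ P -> pind P = 0.
Proof. unfold pind; destruct (ClassicalEpsilon.excluded_middle_informative P); tauto. Qed.

Definition relind c x y := ind (rel c x y).

Lemma fsum2_nonneg (F : nat -> nat -> R) a b : (forall i j, 0 <= F i j) -> 0 <= fsum (fun i => fsum (fun j => F i j) b) a.
Proof. intros H. apply fsum_nonneg. intros. apply fsum_nonneg. auto. Qed.

Lemma fsum2_term (F : nat -> nat -> R) a b i j : (forall i j, 0 <= F i j) -> (i < a)%nat -> (j < b)%nat ->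
  F i j <= fsum (fun i => fsum (fun j => F i j) b) a.
Proof.
  intros H Hi Hj. eapply Rle_trans; [| apply (fsum_term _ a i); auto].
  - apply (fsum_term (fun j => F i j) b j); auto.
  - intros; apply fsum_nonneg; auto.
Qed.

Lemma bad_bound c w n : 0 < INR c ->
  pind (~ goodw c w n) <= fsum (fun i => fsum (fun j =>
     if Nat.ltb i j then relind c (S (n+i)) (S (n+i) + (j - i)) else 0) (length w)) (length w).
Proof.
  intros Hc. assert (Hc' : (0 < c)%nat) by (apply INR_lt; simpl; lra).
  set (l := length w).
  destruct (Classical_Prop.classic (goodw c w n)) as [G|G].
  - rewrite pind_false by tauto. apply fsum2_nonneg. intros i j. destruct (Nat.ltb i j); [apply ind_le01|lra].
  - rewrite pind_true by auto.
    assert (exists i j, (i < j < l)%nat /\ pid c (S (n+i)) = pid c (S (n+j))) as [i [j [Hij He]]].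
    { apply Classical_Prop.NNPP. intros Hn. apply G. unfold goodw. rewrite Lwin_fst.
      apply (nodup_seq_map (fun j => pid c (S (n+j))) 0 l). intros i j Hij E. apply Hn. exists i, j. split; auto. }
    eapply Rle_trans; [|apply (fsum2_term _ l l i j); try lia].
    + cbv beta. assert (Nat.ltb i j = true) by (apply Nat.ltb_lt; lia). rewrite H. unfold relind.
      replace (S (n + i) + (j - i))%nat with (S (n+j)) by lia. rewrite pid_rel; auto; [unfold ind; lra|lia|lia].
    + intros a b. destruct (Nat.ltb a b); [apply ind_le01|lra].
Qed.

Lemma badpair_bound c w n m : 0 < INR c ->
  pind (~ NoDup (map fst (Lwin c w n ++ Lwin c w m))) <=
  pind (~ goodw c w n) + pind (~ goodw c w m) +
  fsum (fun i => fsum (fun j => relind c (S (n+i)) (S (m+j))) (length w)) (length w).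
Proof.
  intros Hc. assert (Hc' : (0 < c)%nat) by (apply INR_lt; simpl; lra).
  set (l := length w).
  assert (H0 : 0 <= fsum (fun i => fsum (fun j => relind c (S (n+i)) (S (m+j))) l) l)
    by (apply fsum2_nonneg; intros; apply ind_le01).
  pose proof (pind_le01 (~ goodw c w n)). pose proof (pind_le01 (~ goodw c w m)).
  destruct (Classical_Prop.classic (NoDup (map fst (Lwin c w n ++ Lwin c w m)))) as [G|G].
  - rewrite pind_false by tauto. lra.
  - rewrite pind_true by auto.
    destruct (Classical_Prop.classic (goodw c w n)) as [Gn|Gn]; [|rewrite (pind_true (~ goodw c w n)); auto; lra].
    destruct (Classical_Prop.classic (goodw c w m)) as [Gm|Gm]; [|rewrite (pind_true (~ goodw c w m)); auto; lra].
    assert (exists a, In a (map fst (Lwin c w n)) /\ In a (map fst (Lwin c w m))) as [a [Ha1 Ha2]].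
    { apply Classical_Prop.NNPP. intros Hn. apply G. rewrite map_app. apply NoDup_app; auto.
      intros a Ha Hb. apply Hn; eauto. }
    rewrite Lwin_fst in Ha1, Ha2. apply in_map_iff in Ha1 as [i [Hi Hi']]. apply in_map_iff in Ha2 as [j [Hj Hj']].
    apply in_seq in Hi', Hj'.
    assert (1 <= fsum (fun i => fsum (fun j => relind c (S (n+i)) (S (m+j))) l) l); [|lra].
    eapply Rle_trans; [|apply (fsum2_term _ l l i j); try lia].
    + cbv beta. unfold relind. rewrite pid_rel; auto; [unfold ind; lra|lia|lia|congruence].
    + intros; apply ind_le01.
Qed.

Open Scope R_scope.

Lemma fsum_swap (F : nat -> nat -> R) na nb :
  fsum (fun a => fsum (fun b => F a b) nb) na = fsum (fun b => fsum (fun a => F a b) na) nb.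
Proof.
  induction na; simpl.
  - rewrite fsum_const. lra.
  - rewrite IHna. rewrite <- fsum_plus. auto.
Qed.

Lemma ind_andb a b : ind (a && b) = ind a * ind b.
Proof. unfold ind; destruct a, b; simpl; lra. Qed.

Lemma pow_half_pos l : 0 < (/2)^l.
Proof. apply pow_lt. lra. Qed.
Lemma pow_half_le1 l : (/2)^l <= 1.
Proof. induction l; simpl; lra. Qed.

Lemma cov_good c w n m M :
  NoDup (map fst (Lwin c w n ++ Lwin c w m)) -> (n + length w < M)%nat -> (m + length w < M)%nat ->
  Ex M (fun om => (ind (agree (Lwin c w n) om) - (/2)^(length w)) * (ind (agree (Lwin c w m) om) - (/2)^(length w))) = 0.
Proof.
  intros Hnd Hn Hm. set (mu := (/2)^(length w)).
  rewrite (Ex_ext M _ (fun om => ind (agree (Lwin c w n ++ Lwin c w m) om) + ((-mu) * ind (agree (Lwin c w n) om)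
     + ((-mu) * ind (agree (Lwin c w m) om) + (fun _ => mu*mu) om)))).
  2:{ intros om. rewrite agree_app, ind_andb. lra. }
  rewrite !Ex_plus, !Ex_scal, Ex_const.
  rewrite map_app in Hnd.
  rewrite !E1.
  - rewrite length_app, !Lwin_len, pow_add. fold mu. lra.
  - eapply NoDup_app_remove_l; eauto.
  - apply Lwin_lt; auto.
  - eapply NoDup_app_remove_r; eauto.
  - apply Lwin_lt; auto.
  - rewrite map_app; auto.
  - apply List.Forall_app; split; apply Lwin_lt; auto.
Qed.

Lemma cov_le c w n m M :
  (n + length w < M)%nat -> (m + length w < M)%nat ->
  Ex M (fun om => (ind (agree (Lwin c w n) om) - (/2)^(length w)) * (ind (agree (Lwin c w m) om) - (/2)^(length w)))
  <= pind (~ NoDup (map fst (Lwin c w n ++ Lwin c w m))).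
Proof.
  intros Hn Hm.
  destruct (excluded_middle_informative (NoDup (map fst (Lwin c w n ++ Lwin c w m)))) as [G|G].
  - rewrite cov_good; auto. apply pind_le01.
  - rewrite pind_true by auto. rewrite <- (Ex_const M 1). apply Ex_le. intros om.
    pose proof (pow_half_pos (length w)). pose proof (pow_half_le1 (length w)).
    pose proof (ind_le01 (agree (Lwin c w n) om)). pose proof (ind_le01 (agree (Lwin c w m) om)).
    set (a := ind _) in *. set (b := ind _) in *. set (mu := (/2)^_) in *. nra.
Qed.

Definition Wn (l c s : nat) : nat := 2*(l*l*(l*l + l*c*s)) + l*l*(2*s).

Lemma Bc_bound c w K : (0 < c)%nat ->
  fsum (fun n => pind (~ goodw c w n)) K <=
  INR (length w) * (INR (length w) * INR (length w * length w + length w * c * Nat.sqrt (K + length w))).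
Proof.
  intros Hc. set (l := length w). set (B := (l*l + l*c*Nat.sqrt (K+l))%nat).
  assert (Hc' : 0 < INR c) by (apply lt_0_INR; auto).
  eapply Rle_trans; [apply fsum_le; intros n _; apply bad_bound; auto|].
  fold l. rewrite fsum_swap.
  rewrite <- (fsum_const (INR l * INR B) l). apply fsum_le. intros i Hi.
  rewrite fsum_swap. rewrite <- fsum_const. apply fsum_le. intros j Hj.
  destruct (Nat.ltb_spec i j).
  2:{ rewrite fsum_const. rewrite Rmult_0_r. apply pos_INR. }
  set (d := (j - i)%nat).
  set (P := fun x => rel c x (x + d)).
  rewrite (fsum_ext _ (fun n => if P (S i + n)%nat then 1 else 0)).
  2:{ intros k _. unfold relind, ind, P. replace (S (k + i)) with (S i + k)%nat by lia. auto. }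
  rewrite fsum_cnt. apply le_INR.
  eapply Nat.le_trans; [apply (cnt_sub _ _ _ (K + l)); lia|].
  eapply Nat.le_trans; [apply cnt_adj; unfold d; lia|].
  unfold B. assert (d <= l)%nat by (unfold d; lia). clearbody d. apply Nat.add_le_mono; [apply Nat.mul_le_mono; lia| apply Nat.mul_le_mono_r, Nat.mul_le_mono_r; lia].
Qed.

Lemma Rsum_bound c (w : list bool) K : (0 < c)%nat ->
  fsum (fun n => fsum (fun m => fsum (fun i => fsum (fun j => relind c (S (n+i)) (S (m+j))) (length w)) (length w)) K) K
  <= INR K * (INR (length w) * (INR (length w) * INR (2 * Nat.sqrt (K + length w)))).
Proof.
  intros Hc. set (l := length w).
  rewrite <- fsum_const. apply fsum_le. intros n Hn.
  rewrite fsum_swap. rewrite <- fsum_const. apply fsum_le. intros i Hi.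
  rewrite fsum_swap. rewrite <- fsum_const. apply fsum_le. intros j Hj.
  rewrite (fsum_ext _ (fun m => if rel c (S (n+i)) (S j + m)%nat then 1 else 0)).
  2:{ intros k _. unfold relind, ind. replace (S (k + j)) with (S j + k)%nat by lia. auto. }
  rewrite fsum_cnt. apply le_INR.
  eapply Nat.le_trans; [apply (cnt_sub _ _ _ (K + l)); lia|].
  apply cnt_rel; lia.
Qed.

Definition Ssum c w K om := fsum (fun n => ind (agree (Lwin c w n) om)) K.

Lemma fsum_minus_const f a K : fsum (fun n => f n - a) K = fsum f K - INR K * a.
Proof.
  rewrite (fsum_ext _ (fun n => f n + (fun _ => -a) n)) by (intros; simpl; lra).
  rewrite fsum_plus, fsum_const. lra.
Qed.

Lemma var_bound c w K M : (0 < c)%nat -> (K + length w < M)%nat ->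
  Ex M (fun om => (Ssum c w K om - INR K * (/2)^(length w))^2)
  <= INR K * INR (Wn (length w) c (Nat.sqrt (K + length w))).
Proof.
  intros Hc HM. set (l := length w). set (mu := (/2)^l).
  assert (Hc' : 0 < INR c) by (apply lt_0_INR; auto).
  rewrite (Ex_ext M _ (fun om => fsum (fun n => fsum (fun m =>
     (ind (agree (Lwin c w n) om) - mu) * (ind (agree (Lwin c w m) om) - mu)) K) K)).
  2:{ intros om. unfold Ssum. rewrite <- fsum_minus_const. rewrite <- Rsqr_pow2. unfold Rsqr.
      rewrite fsum_mul. auto. }
  rewrite Ex_fsum. 
  rewrite (fsum_ext _ (fun n => fsum (fun m => Ex M (fun om => (ind (agree (Lwin c w n) om) - mu) * (ind (agree (Lwin c w m) om) - mu))) K)).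
  2:{ intros n _. apply Ex_fsum. }
  eapply Rle_trans.
  { apply fsum_le. intros n Hn. apply fsum_le. intros m Hm.
    eapply Rle_trans; [apply cov_le; unfold l in *; lia|].
    apply badpair_bound; auto. }
  rewrite (fsum_ext _ (fun n => fsum (fun m => pind (~ goodw c w n)) K + (fsum (fun m => pind (~ goodw c w m)) K
     + fsum (fun m => fsum (fun i => fsum (fun j => relind c (S (n+i)) (S (m+j))) (length w)) (length w)) K))).
  2:{ intros n _. rewrite <- !fsum_plus. apply fsum_ext. intros. lra. }
  rewrite !fsum_plus. rewrite !fsum_const.
  pose proof (Bc_bound c w K Hc). pose proof (Rsum_bound c w K Hc).
  fold l in H, H0.
  set (Bc := fsum (fun n => pind (~ goodw c w n)) K) in *.
  set (s := Nat.sqrt (K + l)) in *.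
  rewrite (fsum_ext _ (fun k => INR K * pind (~ goodw c w k))) by (intros; apply fsum_const).
  rewrite fsum_scal. fold Bc. fold l.
  set (X := INR (l * l + l * c * s)) in *.
  pose proof (pos_INR K).
  assert (INR K * Bc <= INR K * (INR l * (INR l * X))) by (apply Rmult_le_compat_l; auto).
  unfold Wn. fold X. rewrite !plus_INR, !mult_INR. fold X. simpl (INR 2). rewrite !mult_INR in H0. simpl (INR 2) in H0.
  lra.
Qed.

Open Scope R_scope.

Definition freqok c w K e om : Prop :=
  Rabs (INR (occ_count (indicator (Ucol c om)) w K) - INR K * (/2)^(length w)) <= e * INR K.

Lemma occ_Ssum c w K om : INR (occ_count (indicator (Ucol c om)) w K) = Ssum c w K om.
Proof.
  unfold occ_count, Ssum. 
  rewrite (fsum_ext _ (fun n => if occurs_atb (indicator (Ucol c om)) w (0 + n)%nat then 1 else 0)).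
  - rewrite fsum_cnt. auto.
  - intros k _. simpl. rewrite X_agree. auto.
Qed.

Lemma cheb c w K M e : (0 < c)%nat -> (K + length w < M)%nat -> (0 < K)%nat -> 0 < e ->
  Ex M (fun om => pind (~ freqok c w K e om)) <= INR K * INR (Wn (length w) c (Nat.sqrt (K + length w))) / (e * INR K)^2.
Proof.
  intros Hc HM HK He.
  assert (HK' : 0 < INR K) by (apply lt_0_INR; auto).
  assert (Hp : 0 < (e * INR K)^2) by (apply pow_lt; nra).
  eapply Rle_trans.
  - apply (Ex_le M _ (fun om => / (e * INR K)^2 * (Ssum c w K om - INR K * (/2)^(length w))^2)).
    intros om. unfold freqok. rewrite occ_Ssum.
    set (D := Ssum c w K om - INR K * (/2)^(length w)).
    destruct (excluded_middle_informative (Rabs D <= e * INR K)) as [G|G].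
    + rewrite pind_false by tauto. apply Rmult_le_pos; [left; apply Rinv_0_lt_compat; auto| apply pow2_ge_0].
    + rewrite pind_true by auto. apply Rnot_le_lt in G.
      assert ((e * INR K)^2 < D^2).
      { rewrite <- (pow2_abs D). assert (0 < e * INR K) by nra. simpl. nra. }
      apply (Rmult_le_reg_l ((e * INR K)^2)); auto. rewrite <- Rmult_assoc, Rinv_r by lra. lra.
  - rewrite Ex_scal. unfold Rdiv. rewrite Rmult_comm. apply Rmult_le_compat_r.
    + left; apply Rinv_0_lt_compat; auto.
    + apply var_bound; auto.
Qed.

Definition beta (l c : nat) : nat := 2*(l*l*(l*l)) + (2*(l*l*l*c) + 2*(l*l))*(1 + l).

Lemma Wn_beta l c i : (1 <= i)%nat -> (Wn l c (Nat.sqrt (i*i*(i*i) + l)) <= beta l c * (i*i))%nat.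
Proof.
  intros Hi.
  assert (Hs : (Nat.sqrt (i*i*(i*i) + l) <= i*i + l)%nat).
  { rewrite <- (Nat.sqrt_square (i*i+l)). apply Nat.sqrt_le_mono. nia. }
  set (s := Nat.sqrt _) in *. clearbody s.
  unfold Wn, beta.
  assert (E : (2 * (l * l * (l * l + l * c * s)) + l * l * (2 * s) = 2*(l*l*(l*l)) + (2*(l*l*l*c) + 2*(l*l))*s)%nat) by ring.
  rewrite E. set (Q := (2*(l*l*l*c) + 2*(l*l))%nat). set (P := (2*(l*l*(l*l)))%nat).
  assert (Q * s <= Q * (i*i + l))%nat by (apply Nat.mul_le_mono_l; auto).
  assert (1 <= i*i)%nat by nia.
  assert (P <= P * (i*i))%nat by nia.
  assert (Q * (i*i + l) <= Q * (1 + l) * (i*i))%nat by nia.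
  nia.
Qed.

Lemma fail_bound c w m i M : (0 < c)%nat -> (1 <= i)%nat -> (i*i*(i*i) + length w < M)%nat ->
  Ex M (fun om => pind (~ freqok c w (i*i*(i*i)) (/ (INR m + 1)) om))
  <= (INR m + 1)^2 * INR (beta (length w) c) / INR (i*i).
Proof.
  intros Hc Hi HM.
  assert (Hm : 0 < INR m + 1) by (pose proof (pos_INR m); lra).
  assert (Hii : 0 < INR (i*i)) by (apply lt_0_INR; nia).
  eapply Rle_trans; [apply cheb; auto; [nia| apply Rinv_0_lt_compat; auto]|].
  pose proof (Wn_beta (length w) c i Hi) as HW. apply le_INR in HW. rewrite mult_INR in HW.
  set (W := INR (Wn _ _ _)) in *. set (B := INR (beta _ _)) in *. set (q := INR (i*i)) in *.
  rewrite mult_INR. fold q.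
  assert (E : q * q * W / (/ (INR m + 1) * (q * q)) ^ 2 = (INR m + 1)^2 * (W / (q*q))).
  { field. lra. }
  rewrite E. unfold Rdiv at 2. rewrite Rmult_assoc. apply Rmult_le_compat_l; [nra|].
  apply (Rmult_le_reg_r (q*q)); [nra|].
  replace (W / (q*q) * (q*q)) with W by (field; lra).
  replace (B * / q * (q*q)) with (B * q) by (field; lra). lra.
Qed.

Open Scope R_scope.

Fixpoint all_words (l : nat) : list (list bool) :=
  match l with
  | O => [[]]
  | S l' => map (cons false) (all_words l') ++ map (cons true) (all_words l')
  end.

Lemma all_words_len l : length (all_words l) = (2^l)%nat.
Proof. induction l; simpl; auto. rewrite length_app, !length_map, IHl. lia. Qed.

Lemma all_words_in w : In w (all_words (length w)).
Proof.
  induction w as [|b w IH]; simpl; auto. apply in_or_app. destruct b; [right|left]; apply in_map; auto.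
Qed.

Lemma tele a n : (2 <= a)%nat ->
  fsum (fun i => if Nat.leb a i then / INR (i*i) else 0) n <=
  / INR (a - 1) - (if Nat.leb a n then / INR (n - 1) else / INR (a - 1)).
Proof.
  intros Ha. induction n.
  - simpl. destruct (Nat.leb_spec a 0); [lia|]. lra.
  - cbn [fsum]. destruct (Nat.leb_spec a n) as [H1|H1].
    + destruct (Nat.leb_spec a (S n)); [|lia].
      replace (S n - 1)%nat with n by lia.
      assert (Hn1 : 1 <= INR (n-1)) by (apply (le_INR 1); lia).
      assert (En : INR n = INR (n-1) + 1) by (rewrite <- S_INR; f_equal; lia).
      assert (/ INR (n*n) <= / INR (n - 1) - / INR n).
      { rewrite mult_INR, En. apply (Rmult_le_reg_r (INR (n-1) * (INR (n-1)+1) * (INR (n-1)+1))); [nra|].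
        assert (0 < INR (n-1)) by lra. field_simplify; try lra. }
      destruct (Nat.leb a n) eqn:E; [|apply Nat.leb_nle in E; lia]. lra.
    + destruct (Nat.leb a n) eqn:E; [apply Nat.leb_le in E; lia|].
      destruct (Nat.leb_spec a (S n)).
      * assert (a = S n) by lia. subst a. replace (S n - 1)%nat with n by lia. lra.
      * lra.
Qed.

Lemma tele' a n : (2 <= a)%nat ->
  fsum (fun i => if Nat.leb a i then / INR (i*i) else 0) n <= / INR (a - 1).
Proof.
  intros Ha. eapply Rle_trans; [apply tele; auto|].
  assert (0 < / INR (a-1)) by (apply Rinv_0_lt_compat, lt_0_INR; lia).
  destruct (Nat.leb_spec a n).
  - assert (0 < / INR (n-1)) by (apply Rinv_0_lt_compat, lt_0_INR; lia). lra.
  - lra.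
Qed.

Lemma geom n : fsum (fun k => (/2)^k) n = 2 - 2 * (/2)^n.
Proof. induction n; simpl; [lra|]. rewrite IHn. lra. Qed.

Lemma geom_le n : fsum (fun k => (/2)^k) n <= 2.
Proof. rewrite geom. pose proof (pow_half_pos n). lra. Qed.

Lemma forallb_ext_in' {A} (f g : A -> bool) l : (forall x, In x l -> f x = g x) -> forallb f l = forallb g l.
Proof. induction l; simpl; intros H; auto. rewrite H, IHl; auto. Qed.

Lemma filter_ext_in' {A} (f g : A -> bool) l : (forall x, In x l -> f x = g x) -> filter f l = filter g l.
Proof. induction l; simpl; intros H; auto. rewrite H, IHl; auto. Qed.

Lemma occ_dep s s' w K : (forall t, (t < K + length w)%nat -> s t = s' t) -> occ_count s w K = occ_count s' w K.
Proof.
  intros H. unfold occ_count. f_equal. apply filter_ext_in'. intros n Hn. apply in_seq in Hn.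
  unfold occurs_atb. apply forallb_ext_in'. intros j Hj. apply in_seq in Hj. rewrite H; auto. lia.
Qed.

Lemma occ_split s w K d : (occ_count s w K <= occ_count s w (K + d) <= occ_count s w K + d)%nat.
Proof.
  unfold occ_count. rewrite seq_app, filter_app, length_app. simpl.
  pose proof (filter_length_le (occurs_atb s w) (seq K d)). rewrite length_seq in H. lia.
Qed.

Open Scope R_scope.

Lemma all_words_elt l w : In w (all_words l) -> length w = l.
Proof.
  revert w; induction l; simpl; intros w H.
  - destruct H as [<-|[]]; auto.
  - apply in_app_or in H as [H|H]; apply in_map_iff in H as [v [<- Hv]]; simpl; f_equal; auto.
Qed.

Definition i0 (c l m : nat) : nat := (2^l * ((m+1)*(m+1)) * beta l c * 2^(l+m+3) + 2)%nat.

Definition PM (c M : nat) (om : nat -> bool) : Prop :=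
  forall l m i, (l <= M)%nat -> (m <= M)%nat -> (i0 c l m <= i <= M)%nat ->
  forall w, length w = l -> freqok c w (i*i*(i*i)) (/ (INR m + 1)) om.

Definition Dm (M : nat) : nat := (M*M*(M*M) + M + 1)%nat.

Definition gfail (c M : nat) (om : nat -> bool) : R :=
  fsum (fun l => fsum (fun m => fsum (fun i =>
    if Nat.leb (i0 c l m) i then
      fsum (fun t => pind (~ freqok c (nth t (all_words l) []) (i*i*(i*i)) (/ (INR m + 1)) om)) (2^l)
    else 0) (S M)) (S M)) (S M).

Lemma gfail_nonneg_inner c l m i om : 0 <= (if Nat.leb (i0 c l m) i then
      fsum (fun t => pind (~ freqok c (nth t (all_words l) []) (i*i*(i*i)) (/ (INR m + 1)) om)) (2^l)
    else 0).
Proof. destruct (Nat.leb _ _); [apply fsum_nonneg; intros; apply pind_le01|lra]. Qed.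

Lemma gfail_ge c M om : ~ PM c M om -> 1 <= gfail c M om.
Proof.
  intros H. unfold PM in H.
  assert (exists l m i w, (l <= M)%nat /\ (m <= M)%nat /\ (i0 c l m <= i <= M)%nat /\ length w = l /\
     ~ freqok c w (i*i*(i*i)) (/ (INR m + 1)) om) as [l [m [i [w [H1 [H2 [H3 [H4 H5]]]]]]]].
  { apply Classical_Prop.NNPP. intros Hn. apply H. intros l m i H1 H2 H3 w H4.
    apply Classical_Prop.NNPP. intros H5. apply Hn. exists l, m, i, w. tauto. }
  pose proof (all_words_in w) as Hin. rewrite H4 in Hin.
  destruct (In_nth _ _ [] Hin) as [t [Ht Hnth]]. rewrite all_words_len in Ht.
  unfold gfail.
  eapply Rle_trans; [|apply (fsum_term _ _ l); [intros; apply fsum_nonneg; intros; apply fsum_nonneg; intros; apply gfail_nonneg_inner|lia]].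
  eapply Rle_trans; [|apply (fsum_term _ _ m); [intros; apply fsum_nonneg; intros; apply gfail_nonneg_inner|lia]].
  eapply Rle_trans; [|apply (fsum_term _ _ i); [intros; apply gfail_nonneg_inner|lia]].
  cbv beta. destruct (Nat.leb_spec (i0 c l m) i); [|lia].
  eapply Rle_trans; [|apply (fsum_term _ _ t); [intros; apply pind_le01|auto]].
  cbv beta. rewrite Hnth. rewrite pind_true; auto. lra.
Qed.

Lemma Ex_if M (b : bool) (f : (nat -> bool) -> R) : Ex M (fun om => if b then f om else 0) = if b then Ex M f else 0.
Proof. destruct b; auto. apply Ex_const. Qed.

Lemma gfail_Ex c M : (0 < c)%nat -> Ex (Dm M) (gfail c M) <= / 2.
Proof.
  intros Hc. unfold gfail.
  rewrite Ex_fsum.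
  eapply Rle_trans with (fsum (fun l => fsum (fun m => (/2)^(l+m+3)) (S M)) (S M)).
  - apply fsum_le. intros l Hl. rewrite Ex_fsum. apply fsum_le. intros m Hm. rewrite Ex_fsum.
    set (X := (2^l * ((m+1)*(m+1)) * beta l c)%nat).
    eapply Rle_trans with (fsum (fun i => INR X * (if Nat.leb (i0 c l m) i then / INR (i*i) else 0)) (S M)).
    + apply fsum_le. intros i Hi. rewrite Ex_if.
      destruct (Nat.leb_spec (i0 c l m) i) as [Hi0|Hi0]; [|lra].
      rewrite Ex_fsum.
      eapply Rle_trans.
      { apply fsum_le. intros t Ht. apply fail_bound; auto.
        - assert (2 <= i0 c l m)%nat by (unfold i0; apply Nat.le_add_l). lia.
        - assert (Hw : length (nth t (all_words l) []) = l).
          { apply all_words_elt. apply nth_In. rewrite all_words_len. auto. }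
          rewrite Hw. unfold Dm. assert (i <= M)%nat by lia.
          assert (i*i <= M*M)%nat by (apply Nat.mul_le_mono; auto). assert (i*i*(i*i) <= M*M*(M*M))%nat by (apply Nat.mul_le_mono; auto).
          lia. }
      rewrite (fsum_ext _ (fun _ => (INR m + 1)^2 * INR (beta l c) / INR (i*i))).
      2:{ intros t Ht. rewrite (all_words_elt l); auto. apply nth_In. rewrite all_words_len. auto. }
      rewrite fsum_const. unfold X. rewrite !mult_INR, pow_INR, plus_INR. simpl (INR 1). simpl (INR 2).
      right. unfold Rdiv. ring.
    + rewrite fsum_scal.
      assert (Hi0 : (2 <= i0 c l m)%nat) by (unfold i0; apply Nat.le_add_l).
      pose proof (tele' (i0 c l m) (S M) Hi0).
      assert (HX : 0 <= INR X) by apply pos_INR.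
      eapply Rle_trans; [apply Rmult_le_compat_l; [exact HX| exact H]|].
      unfold i0. fold X. replace (X * 2^(l+m+3) + 2 - 1)%nat with (X * 2^(l+m+3) + 1)%nat by (clearbody X; lia).
      rewrite plus_INR, mult_INR, pow_INR. simpl (INR 1). simpl (INR 2).
      rewrite pow_inv.
      assert (Hp : 0 < 2^(l+m+3)) by (apply pow_lt; lra).
      apply (Rmult_le_reg_r (INR X * 2^(l+m+3) + 1)); [nra|].
      rewrite Rmult_assoc, Rinv_l by nra.
      rewrite Rmult_plus_distr_l.
      replace (/ 2^(l+m+3) * (INR X * 2^(l+m+3))) with (INR X) by (field; lra).
      assert (0 < / 2^(l+m+3)) by (apply Rinv_0_lt_compat; auto). lra.
  - rewrite (fsum_ext _ (fun l => (/2)^l * (/8 * fsum (fun m => (/2)^m) (S M)))).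
    2:{ intros l _. rewrite <- !fsum_scal. apply fsum_ext. intros m _.
        rewrite !pow_add. simpl. lra. }
    rewrite (fsum_ext _ (fun l => (/8 * fsum (fun m => (/2)^m) (S M)) * (/2)^l)) by (intros; lra).
    rewrite fsum_scal.
    pose proof (geom_le (S M)). assert (0 <= fsum (fun m => (/2)^m) (S M)) by (apply fsum_nonneg; intros; left; apply pow_half_pos).
    change (fsum (pow (/ 2)) (S M)) with (fsum (fun k => (/2)^k) (S M)). set (F := fsum _ (S M)) in *. nra.
Qed.

Lemma PM_exists c M : (0 < c)%nat -> exists om, PM c M om.
Proof.
  intros Hc. apply (Ex_exists (Dm M) _ (gfail c M)).
  - apply gfail_ge.
  - pose proof (gfail_Ex c M Hc). lra.
Qed.

Lemma PM_mono c M M' om : (M <= M')%nat -> PM c M' om -> PM c M om.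
Proof. intros H HP l m i H1 H2 H3 w H4. apply (HP l m i); auto; lia. Qed.

Lemma PM_dep c M om om' : (forall j, (j < Dm M)%nat -> om j = om' j) -> PM c M om -> PM c M om'.
Proof.
  intros Hag HP l m i H1 H2 H3 w H4. specialize (HP l m i H1 H2 H3 w H4).
  unfold freqok in *.
  rewrite <- (occ_dep (indicator (Ucol c om))); auto.
  intros t Ht. unfold indicator, Ucol. rewrite Hag; auto.
  destruct (pid_spec c (S t) ltac:(lia)) as [_ [Hle _]].
  unfold Dm. assert (i <= M)%nat by lia. assert (i*i <= M*M)%nat by (apply Nat.mul_le_mono; auto). assert (i*i*(i*i) <= M*M*(M*M))%nat by (apply Nat.mul_le_mono; auto). lia.
Qed.

Open Scope R_scope.

Definition ExtP (c L : nat) (p : nat -> bool) : Prop :=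
  forall M, exists om, (forall j, (j < L)%nat -> om j = p j) /\ PM c M om.

Lemma ext_step c L p : ExtP c L p -> ExtP c (S L) (upd p L false) \/ ExtP c (S L) (upd p L true).
Proof.
  intros H. apply Classical_Prop.NNPP. intros Hn.
  apply Classical_Prop.not_or_and in Hn as [H0 H1].
  unfold ExtP in H0, H1.
  apply Classical_Pred_Type.not_all_ex_not in H0 as [M0 H0].
  apply Classical_Pred_Type.not_all_ex_not in H1 as [M1 H1].
  destruct (H (Nat.max M0 M1)) as [om [Hag HP]].
  destruct (om L) eqn:E.
  - apply H1. exists om. split.
    + intros j Hj. unfold upd. destruct (Nat.eqb_spec j L); [subst; auto|]. apply Hag; lia.
    + eapply PM_mono; [|exact HP]. lia.
  - apply H0. exists om. split.
    + intros j Hj. unfold upd. destruct (Nat.eqb_spec j L); [subst; auto|]. apply Hag; lia.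
    + eapply PM_mono; [|exact HP]. lia.
Qed.

Fixpoint pref (c L : nat) : nat -> bool :=
  match L with
  | O => fun _ => false
  | S L' => if excluded_middle_informative (ExtP c (S L') (upd (pref c L') L' false))
            then upd (pref c L') L' false else upd (pref c L') L' true
  end.

Lemma pref_ext c L : (0 < c)%nat -> ExtP c L (pref c L).
Proof.
  intros Hc. induction L; simpl.
  - intros M. destruct (PM_exists c M Hc) as [om Hom]. exists om. split; auto. intros; lia.
  - destruct (excluded_middle_informative _) as [E|E]; auto.
    destruct (ext_step c L (pref c L) IHL); tauto.
Qed.

Lemma pref_stable c L j : (j < L)%nat -> pref c (S L) j = pref c L j.
Proof.
  intros H. simpl. destruct (excluded_middle_informative _); unfold upd;
  destruct (Nat.eqb_spec j L); auto; lia.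
Qed.

Lemma pref_stable' c L L' j : (j < L)%nat -> (L <= L')%nat -> pref c L' j = pref c L j.
Proof.
  intros H H'. induction H'; auto. rewrite pref_stable; auto. lia.
Qed.

Definition omstar (c : nat) : nat -> bool := fun j => pref c (S j) j.

Lemma omstar_PM c M : (0 < c)%nat -> PM c M (omstar c).
Proof.
  intros Hc. destruct (pref_ext c (Dm M) Hc M) as [om [Hag HP]].
  apply (PM_dep c M om); auto.
  intros j Hj. rewrite Hag; auto. unfold omstar. apply pref_stable'; lia.
Qed.

Lemma final_est (occK occN K N : nat) mu e d : 0 <= mu <= 1 -> (K <= N)%nat ->
  (occK <= occN <= occK + (N - K))%nat -> Rabs (INR occK - INR K * mu) <= e * INR K ->
  (0 < N)%nat -> INR (N - K) <= d * INR N -> 0 <= e ->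
  Rabs (INR occN / INR N - mu) <= e + 2 * d.
Proof.
  intros Hmu HKN Hocc HK HN Hd He.
  assert (HN' : 0 < INR N) by (apply lt_0_INR; auto).
  assert (E : INR occN / INR N - mu = (INR occN - INR N * mu) / INR N) by (field; lra).
  rewrite E. unfold Rdiv. rewrite Rabs_mult, Rabs_inv, (Rabs_right (INR N)) by lra.
  apply (Rmult_le_reg_r (INR N)); auto. rewrite Rmult_assoc, Rinv_l, Rmult_1_r by lra.
  assert (H1 : INR occK <= INR occN) by (apply le_INR; lia).
  assert (H2 : INR occN <= INR occK + INR (N - K)) by (rewrite <- plus_INR; apply le_INR; lia).
  assert (H3 : INR N = INR K + INR (N - K)) by (rewrite <- plus_INR; f_equal; lia).
  assert (H4 : INR K <= INR N) by (apply le_INR; auto).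
  pose proof (pos_INR (N - K)).
  apply Rabs_le. apply Rabs_le_between in HK. split; nra.
Qed.

Lemma root4 N : let i := Nat.sqrt (Nat.sqrt N) in (i*i*(i*i) <= N < (i+1)*(i+1)*((i+1)*(i+1)))%nat.
Proof.
  intros i. pose proof (Nat.sqrt_spec N ltac:(lia)) as [A1 A2].
  pose proof (Nat.sqrt_spec (Nat.sqrt N) ltac:(lia)) as [B1 B2]. fold i in B1, B2.
  set (s := Nat.sqrt N) in *. clearbody i s. split.
  - assert (i*i*(i*i) <= s*s)%nat by (apply Nat.mul_le_mono; auto). lia.
  - assert (S s <= (i+1)*(i+1))%nat by lia.
    assert (S s * S s <= (i+1)*(i+1)*((i+1)*(i+1)))%nat by (apply Nat.mul_le_mono; auto). lia.
Qed.

Lemma root4_ge N i1 : (i1*i1*(i1*i1) <= N)%nat -> (i1 <= Nat.sqrt (Nat.sqrt N))%nat.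
Proof.
  intros H. apply (proj1 (Nat.sqrt_le_square _ _)). apply (proj1 (Nat.sqrt_le_square _ _)). exact H.
Qed.

Theorem normal_omstar c : (0 < c)%nat -> normal_set (Ucol c (omstar c)).
Proof.
  intros Hc w. set (l := length w).
  apply is_lim_seq_spec. intros eps. destruct eps as [eps Heps]. simpl.
  destruct (INR_unbounded (3 / eps)) as [m Hm].
  destruct (INR_unbounded (90 / eps)) as [j Hj].
  set (i1 := Nat.max (i0 c l m) (Nat.max j 1)).
  exists (i1*i1*(i1*i1))%nat. intros N HN.
  pose proof (root4 N) as [R1 R2]. set (i := Nat.sqrt (Nat.sqrt N)) in *.
  assert (Hi1 : (i1 <= i)%nat) by (apply root4_ge; auto).
  assert (Hi : (1 <= i)%nat) by lia.
  set (K := (i*i*(i*i))%nat) in *.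
  pose proof (omstar_PM c (Nat.max l (Nat.max m i)) Hc l m i ltac:(lia) ltac:(lia) ltac:(lia) w eq_refl) as HP.
  unfold freqok in HP. fold l K in HP.
  rewrite <- pow_inv.
  assert (HmR : / (INR m + 1) < eps / 3).
  { assert (3/eps * eps < (INR m + 1) * eps) by (apply Rmult_lt_compat_r; [lra| pose proof (pos_INR m); lra]).
    assert (0 < INR m + 1) by (pose proof (pos_INR m); lra).
    apply (Rmult_lt_reg_r (INR m + 1)); auto. rewrite Rinv_l by lra.
    replace (3/eps*eps) with 3 in H by (field; lra). nra. }
  assert (HiR : INR j <= INR i) by (apply le_INR; lia).
  assert (Hi0 : 0 < INR i) by (apply lt_0_INR; lia).
  assert (HNK : (N - K <= 15 * (i*i*i))%nat) by (unfold K in *; nia).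
  assert (Hd : INR (N - K) <= 15 / INR i * INR N).
  { apply (Rmult_le_reg_r (INR i)); auto.
    replace (15 / INR i * INR N * INR i) with (15 * INR N) by (field; lra).
    rewrite <- mult_INR. replace 15 with (INR 15) by (simpl; lra). rewrite <- mult_INR. apply le_INR.
    unfold K in R1. nia. }
  pose proof (occ_split (indicator (Ucol c (omstar c))) w K (N - K)) as Hs.
  replace (K + (N - K))%nat with N in Hs by lia.
  cbv beta. eapply Rle_lt_trans.
  - apply (final_est (occ_count (indicator (Ucol c (omstar c))) w K) (occ_count (indicator (Ucol c (omstar c))) w N) K N _ (/ (INR m + 1)) (15 / INR i)); auto.
    + split; [left; apply pow_half_pos| apply pow_half_le1].
    + lia.
    + left; apply Rinv_0_lt_compat. pose proof (pos_INR m). lra.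
  - assert (15 / INR i <= eps / 6).
    { apply (Rmult_le_reg_r (INR i)); auto. replace (15 / INR i * INR i) with 15 by (field; lra).
      assert (90/eps * eps < INR j * eps) by (apply Rmult_lt_compat_r; lra).
      replace (90/eps*eps) with 90 in H by (field; lra). nra. }
    lra.
Qed.

Theorem mainTheorem17 (c k : nat) (hc : (1 <= c)%nat) (hk : (1 <= k)%nat)
  (hsq : ~ is_perfect_square c) (heven : Nat.Even k) :
  exists A : nat -> bool,
    normal_set A /\
    forall x y n : nat, (1 <= x)%nat -> (1 <= y)%nat -> (1 <= n)%nat ->
      A x = true -> A y = true -> (x * y <> c * n ^ k)%nat.
Proof.
  exists (Ucol c (omstar c)). split.
  - apply normal_omstar; lia.
  - intros x y n Hx Hy Hn Ax Ay E.
    destruct heven as [h Hh].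
    apply (no_conflict c (omstar c) x y); auto; try lia.
    rewrite E. subst k. replace (n^(2*h))%nat with (n^h*n^h)%nat by (rewrite <- Nat.pow_add_r; f_equal; lia).
    replace (c * (n ^ h * n ^ h) * c)%nat with ((c * n^h) * (c * n^h))%nat by ring. apply sq_sq.
Qed.
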